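(* Let $m,k\in\mathbb{N}$. Then \[ {}_3F_2\left[\begin{array}{r} -2m-1,\ 1+k,\ 1+k;\\ -2m-1-k,\ -2m-1-k;\end{array}1\right]_{2m+1}=0. \]
   Context: $\mathbb{N}=\{1,2,3,\dots\}$. For $a\in\mathbb{C}$ and $n\in\mathbb{N}_0$, $(a)_0=1$ and $(a)_n=a(a+1)\cdots(a+n-1)$. For $N\in\mathbb{N}_0$, ${}_3F_2\left[\begin{array}{r} a_1,a_2,a_3;\\ b_1,b_2;\end{array}z\right]_N=\sum_{n=0}^{N}\frac{(a_1)_n(a_2)_n(a_3)_n}{(b_1)_n(b_2)_n}\frac{z^n}{n!}$ (the sum of the first $N+1$ terms), defined whenever $(b_1)_n(b_2)_n\neq0$ for $0\le n\le N$. *)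

(* Defs.v *)
From mathcomp Require Import all_boot all_algebra.
Set Implicit Arguments. Unset Strict Implicit. Unset Printing Implicit Defensive.
Import GRing.Theory Num.Theory.
Local Open Scope ring_scope.

Definition poch {R : pzRingType} (a : R) (n : nat) : R :=
  \prod_(i < n) (a + i%:R).

Definition F32_trunc {R : fieldType} (a1 a2 a3 b1 b2 z : R) (N : nat) : R :=
  \sum_(n < N.+1)
     (poch a1 n * poch a2 n * poch a3 n) / (poch b1 n * poch b2 n)
       * (z ^+ n / (n`!)%:R).

(* Main.v *)
Require Import Defs.
From mathcomp Require Import all_boot all_algebra.
From mathcomp Require Import ring lra zify.
Import GRing.Theory Num.Theory.
Local Open Scope ring_scope.

Lemma pochS {R : comPzRingType} (a : R) n : poch a n.+1 = poch a n * (a + n%:R).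
Proof. by rewrite /poch big_ord_recr. Qed.

Lemma poch_neg {R : comPzRingType} (M n : nat) : (n <= M)%N ->
  poch (- (M%:R : R)) n = (-1) ^+ n * (M ^_ n)%:R.
Proof.
elim: n => [|n IH] hn; first by rewrite /poch big_ord0 ffactn0 expr0 mulr1.
rewrite pochS IH ?(ltnW hn) // ffactnSr natrM natrB ?(ltnW hn) // exprS.
ring.
Qed.

Lemma poch_pos {R : comPzRingType} (k n : nat) :
  poch (1 + (k%:R : R)) n * (k`!)%:R = ((k + n)`!)%:R.
Proof.
elim: n => [|n IH]; first by rewrite /poch big_ord0 mul1r addn0.
rewrite pochS -mulrA (mulrC (_ + _)) mulrA IH addnS factS natrM mulrC.
congr (_ * _); rewrite -addn1 !natrD; ring.
Qed.

Section Main.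
Variable R : numFieldType.
Variables (N k : nat).

Definition tt (n : nat) : R :=
  (poch (- (N%:R)) n * poch (1 + k%:R) n * poch (1 + k%:R) n) /
  (poch (- (N + k)%:R) n * poch (- (N + k)%:R) n) * (1 ^+ n / (n`!)%:R).

Definition BB (n : nat) : R :=
  ((k + n)`! * (N + k - n)`!)%:R / (k`! * (N + k)`!)%:R.

Lemma fact_neq0 n : ((n`!)%:R : R) != 0.
Proof. by rewrite pnatr_eq0 -lt0n fact_gt0. Qed.

Lemma tt_closed n : (n <= N)%N ->
  tt n = (-1) ^+ n * ('C(N, n))%:R * BB n ^+ 2.
Proof.
move=> hn.
have hnk : (n <= N + k)%N by apply: leq_trans hn (leq_addr _ _).
rewrite /tt /BB (poch_neg _ _ hn) (poch_neg _ _ hnk) expr1n.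
have hP : poch (1 + (k%:R : R)) n = ((k + n)`!)%:R / (k`!)%:R.
  by rewrite -poch_pos mulrK // unitfE fact_neq0.
rewrite hP.
have hQ : (((N + k) ^_ n)%:R : R) = ((N + k)`!)%:R / ((N + k - n)`!)%:R.
  by rewrite -(ffact_fact hnk) natrM mulrK // unitfE fact_neq0.
have hC : (((N) ^_ n)%:R : R) = ('C(N, n))%:R * (n`!)%:R.
  by rewrite -bin_ffact natrM.
rewrite hQ hC !natrM.
have h1 : ((-1 : R) ^+ n) ^+ 2 = 1 by rewrite sqrr_sign.
have f1 := fact_neq0 n. have f2 := fact_neq0 k. have f3 := fact_neq0 (N + k).
have f4 := fact_neq0 (N + k - n). have f5 := fact_neq0 (k + n).
have s1 : (-1 : R) ^+ n != 0 by rewrite expf_neq0 // oppr_eq0 oner_eq0.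
move: h1 s1 f1 f2 f3 f4 f5.
set s := (-1) ^+ n. set a := n`!%:R. set b := k`!%:R. set c := (N + k)`!%:R.
set d := (N + k - n)`!%:R. set e := (k + n)`!%:R. set C := 'C(N, n)%:R.
move=> h1 s1 f1 f2 f3 f4 f5.
rewrite (_ : s * _ * (s * _) = (s * s) * ((c / d) * (c / d))); last by ring.
rewrite -(expr2 s) h1 mul1r.
by field; rewrite ?f1 ?f2 ?f3 ?f4 ?f5 ?s1.
Qed.

End Main.

Theorem mainTheorem13 (R : numFieldType) (m k : nat) (hm : (0 < m)%N) (hk : (0 < k)%N) :
  F32_trunc (R:=R)
    (- (2 * m + 1)%:R) (1 + k%:R) (1 + k%:R)
    (- (2 * m + 1 + k)%:R) (- (2 * m + 1 + k)%:R)
    1 (2 * m + 1) = 0.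
Proof.
set N := (2 * m + 1)%N.
have -> : F32_trunc (R:=R) (- N%:R) (1 + k%:R) (1 + k%:R)
    (- (N + k)%:R) (- (N + k)%:R) 1 N = \sum_(n < N.+1) tt R N k n by [].
set S := \sum_(n < N.+1) _.
have hS : S = - S.
  rewrite {1}/S (reindex_inj rev_ord_inj) /= /S -sumrN.
  apply: eq_bigr => i _.
  have hi : (i <= N)%N by rewrite -ltnS.
  have hr : (N.+1 - i.+1 = N - i)%N by rewrite subSS.
  rewrite hr (@tt_closed R N k _ (leq_subr _ _)) (@tt_closed R N k _ hi) bin_sub //.
  have -> : BB R N k (N - i) = BB R N k i.
    rewrite /BB [in LHS]mulnC; congr ((_ * _)%:R / _); congr (_ `!); lia.
  have : ((-1 : R) ^+ (N - i)) * (-1) ^+ i = -1.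
    by rewrite -exprD subnK // /N addn1 exprS mulN1r mulnC exprM sqrr_sign.
  move=> he.
  have -> : (-1 : R) ^+ (N - i) = - (-1) ^+ i.
    apply: (mulIf (x := (-1) ^+ i)); first by rewrite expf_neq0 // oppr_eq0 oner_eq0.
    by rewrite he mulNr -expr2 sqrr_sign.
  ring.
have : 2%:R * S = 0 by rewrite mulr_natl mulr2n {2}hS subrr.
by move/eqP; rewrite mulf_eq0 pnatr_eq0 /= => /eqP.
Qed.
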